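(* For $n\in\mathbb{Z}^+$ we have $$\begin{aligned}&t(1,4,7;n)=2N(1,4,7;2n+3)&&\text{for } n\equiv 1\pmod 4,\\ &t(1,7,12;n)=2N(1,7,12;2n+5)&&\text{for } n\equiv 3\pmod 4,\\ &t(1,7,28;n)=2N(1,7,28;2n+9)&&\text{for } n\equiv 1\pmod 4,\\ &t(3,4,21;n)=2N(3,4,21;2n+7)&&\text{for } n\equiv 1\pmod 4,\\ &t(3,21,28;n)=2N(3,21,28;2n+13)&&\text{for } n\equiv 1\pmod 4.\end{aligned}$$
   Context: $\mathbb{Z}^+$ is the set of positive integers. For $a,b,c\in\mathbb{Z}^+$ and nonnegative integer $n$, $N(a,b,c;n)$ denotes the number of triples $(x,y,z)\in\mathbb{Z}^3$ with $n=ax^2+by^2+cz^2$, and $t(a,b,c;n)$ denotes the number of triples $(x,y,z)\in\mathbb{Z}^3$ with $n=a\frac{x(x+1)}2+b\frac{y(y+1)}2+c\frac{z(z+1)}2$. *)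

(* Defs.v *)
From mathcomp Require Import all_boot all_order all_algebra.
Import GRing.Theory Num.Theory.
Local Open Scope ring_scope.

Definition zbox (B : nat) : seq int := [seq (Posz i - Posz B) | i <- iota 0 (2 * B).+1].

Definition ztriples (B : nat) : seq (int * int * int) :=
  flatten [seq flatten [seq [seq (x, y, z) | z <- zbox B] | y <- zbox B] | x <- zbox B].

(* Every solution satisfies |x|,|y|,|z| <= n (since a,b,c >= 1 and x^2 >= |x|),
   so counting over the box [-(n+1), n+1]^3 counts all solutions in Z^3. *)
Definition Nrep (a b c n : nat) : nat :=
  size [seq v <- (ztriples n.+1)
       | let: (x, y, z) := v in
         a%:Z * x ^+ 2 + b%:Z * y ^+ 2 + c%:Z * z ^+ 2 == n%:Z].

(* Number of (x,y,z) in Z^3 with a x(x+1)/2 + b y(y+1)/2 + c z(z+1)/2 = n,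
   written (to stay in Z) as  a x(x+1) + b y(y+1) + c z(z+1) = 2n.
   Every solution has x(x+1)/2 <= n, and x(x+1)/2 >= |x| - 1 for all x in Z,
   hence |x| <= n+1, so the box [-(n+1), n+1]^3 contains all solutions. *)
Definition trep (a b c n : nat) : nat :=
  size [seq v <- (ztriples n.+1)
       | let: (x, y, z) := v in
         a%:Z * (x * (x + 1)) + b%:Z * (y * (y + 1)) + c%:Z * (z * (z + 1))
           == (2 * n)%:Z].

(* Main.v *)
Require Import Defs.
From mathcomp Require Import all_boot all_order all_algebra.
From mathcomp Require Import ring zify.
Import GRing.Theory Num.Theory.
Local Open Scope ring_scope.

Definition v3 := (int * int * int)%type.
Definition mat := (v3 * v3 * v3)%type.
Definition dot (r v : v3) : int := r.1.1 * v.1.1 + r.1.2 * v.1.2 + r.2 * v.2.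
Definition app (M : mat) (v : v3) : v3 := (dot M.1.1 v, dot M.1.2 v, dot M.2 v).
Definition sc (k : int) (v : v3) : v3 := (k * v.1.1, k * v.1.2, k * v.2).
Definition Qf (a b c : int) (v : v3) : int := a * v.1.1 ^+ 2 + b * v.1.2 ^+ 2 + c * v.2 ^+ 2.
Definition odd3 (u : v3) : v3 := (2 * u.1.1 + 1, 2 * u.1.2 + 1, 2 * u.2 + 1).

Lemma app_sc M k v : app M (sc k v) = sc k (app M v).
Proof. by rewrite /app /sc /dot /=; congr (_, _, _); ring. Qed.
Lemma Qf_sc a b c k v : Qf a b c (sc k v) = k ^+ 2 * Qf a b c v.
Proof. by rewrite /Qf /sc /=; ring. Qed.

Lemma dot_cong (d : int) r (y k : v3) :
  modz (dot r (y.1.1 + k.1.1 * d, y.1.2 + k.1.2 * d, y.2 + k.2 * d)) d = modz (dot r y) d.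
Proof.
have -> : dot r (y.1.1 + k.1.1 * d, y.1.2 + k.1.2 * d, y.2 + k.2 * d)
   = (r.1.1 * k.1.1 + r.1.2 * k.1.2 + r.2 * k.2) * d + dot r y by rewrite /dot /=; ring.
by rewrite modzMDl.
Qed.

Lemma mod_decomp (x : int) (d : int) : x = (modz x d) + (divz x d) * d.
Proof. by rewrite addrC -divz_eq. Qed.

Lemma mod_4 (p : int) : modz p 8 = 4 -> p = ((p - 4) %/ 8)%Z * 8 + 4.
Proof.
move=> h; have e := divz_eq (p - 4) 8.
have h0 : modz (p - 4) 8 = 0 by rewrite -modzDml h.
by rewrite h0 addr0 in e; rewrite -e subrK.
Qed.

Lemma mod_0 (p : int) (d : int) : modz p d = 0 -> p = (p %/ d)%Z * d.
Proof. by move=> h; rewrite {1}(divz_eq p d) h addr0. Qed.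

Definition valid (x : v3) (AC : mat * mat) : bool :=
  [&& modz (dot AC.1.1.1 x) 8 == 4, modz (dot AC.1.1.2 x) 8 == 4 & modz (dot AC.1.2 x) 8 == 4].
Definition pre (t : v3) (AC : mat * mat) : bool :=
  [&& modz (dot AC.2.1.1 (odd3 t)) 32 == 0, modz (dot AC.2.1.2 (odd3 t)) 32 == 0
    & modz (dot AC.2.2 (odd3 t)) 32 == 0].
Definition rng (k : nat) : seq int := [seq Posz i | i <- iota 0 k].
Definition box (k : nat) : seq v3 :=
  flatten [seq flatten [seq [seq (x, y, z) | z <- rng k] | y <- rng k] | x <- rng k].
Definition chk_a (a b c m0 : int) (fam : seq (mat * mat)) : bool :=
  all (fun r => (modz (Qf a b c r) 8 != m0) || (count (valid r) fam == 2%N)) (box 8).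
Definition chk_b (a b c m0 : int) (fam : seq (mat * mat)) : bool :=
  all (fun u => (modz (Qf a b c (odd3 u)) 32 != modz (4 * m0) 32)
                || (count (pre u) fam == 1%N)) (box 16).

Lemma mem_rng (k : nat) (c : int) : 0 <= c -> c < k%:Z -> c \in rng k.
Proof.
case: c => // i _ lt; apply/mapP; exists i => //.
by rewrite mem_iota add0n; rewrite ltz_nat in lt.
Qed.

Lemma mem_box (k : nat) (x y z : int) : x \in rng k -> y \in rng k -> z \in rng k ->
  (x, y, z) \in box k.
Proof.
move=> hx hy hz; apply/flatten_mapP; exists x => //.
apply/flatten_mapP; exists y => //; exact: map_f.
Qed.

Lemma mem_rng_mod (k : nat) (x : int) : (0 < k)%N -> modz x k%:Z \in rng k.
Proof.
move=> k0; apply: mem_rng; first by rewrite modz_ge0 // eqz_nat -lt0n.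
by rewrite ltz_pmod // ltz_nat.
Qed.

Lemma valid_cong x : valid x =1 valid (modz x.1.1 8, modz x.1.2 8, modz x.2 8).
Proof.
move=> AC; rewrite /valid.
have e : x = ((modz x.1.1 8, modz x.1.2 8, modz x.2 8).1.1 + (divz x.1.1 8) * 8,
              (modz x.1.1 8, modz x.1.2 8, modz x.2 8).1.2 + (divz x.1.2 8) * 8,
              (modz x.1.1 8, modz x.1.2 8, modz x.2 8).2 + (divz x.2 8) * 8).
  by case: x => [[x1 x2] x3] /=; rewrite -!mod_decomp.
rewrite {1 2 3}e.
by rewrite (dot_cong 8 _ _ (divz x.1.1 8, divz x.1.2 8, divz x.2 8))
  (dot_cong 8 _ _ (divz x.1.1 8, divz x.1.2 8, divz x.2 8))
  (dot_cong 8 _ _ (divz x.1.1 8, divz x.1.2 8, divz x.2 8)).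
Qed.

Definition md (d : int) (x : v3) : v3 := (modz x.1.1 d, modz x.1.2 d, modz x.2 d).

Lemma odd3_decomp t : odd3 t =
  ((odd3 (md 16 t)).1.1 + (divz t.1.1 16) * 32,
   (odd3 (md 16 t)).1.2 + (divz t.1.2 16) * 32,
   (odd3 (md 16 t)).2 + (divz t.2 16) * 32).
Proof.
case: t => [[t1 t2] t3]; rewrite /odd3 /md /=.
by rewrite {1}(mod_decomp t1 16) {1}(mod_decomp t2 16) {1}(mod_decomp t3 16);
  congr (_, _, _); ring.
Qed.

Lemma pre_cong t : pre t =1 pre (md 16 t).
Proof.
move=> AC; rewrite /pre {1 2 3}odd3_decomp.
by rewrite !(dot_cong 32 _ _ (divz t.1.1 16, divz t.1.2 16, divz t.2 16)).
Qed.

Lemma Qf_mod8 a b c x : modz (Qf a b c x) 8 = modz (Qf a b c (md 8 x)) 8.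
Proof.
case: x => [[x1 x2] x3]; rewrite /md /=.
set r1 := modz x1 8; set r2 := modz x2 8; set r3 := modz x3 8.
set q1 := divz x1 8; set q2 := divz x2 8; set q3 := divz x3 8.
have -> : Qf a b c (x1, x2, x3) =
  (a * (2 * r1 * q1 + q1 ^+ 2 * 8) + b * (2 * r2 * q2 + q2 ^+ 2 * 8)
   + c * (2 * r3 * q3 + q3 ^+ 2 * 8)) * 8 + Qf a b c (r1, r2, r3).
  rewrite /Qf /= {1}(mod_decomp x1 8) {1}(mod_decomp x2 8) {1}(mod_decomp x3 8).
  rewrite -/r1 -/r2 -/r3 -/q1 -/q2 -/q3; ring.
by rewrite modzMDl.
Qed.

Lemma Qf_mod32 a b c t : modz (Qf a b c (odd3 t)) 32 = modz (Qf a b c (odd3 (md 16 t))) 32.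
Proof.
rewrite {1}odd3_decomp.
set r1 := (odd3 (md 16 t)).1.1; set r2 := (odd3 (md 16 t)).1.2; set r3 := (odd3 (md 16 t)).2.
set q1 := divz t.1.1 16; set q2 := divz t.1.2 16; set q3 := divz t.2 16.
have -> : Qf a b c (r1 + q1 * 32, r2 + q2 * 32, r3 + q3 * 32) =
  (a * (2 * r1 * q1 + q1 ^+ 2 * 32) + b * (2 * r2 * q2 + q2 ^+ 2 * 32)
   + c * (2 * r3 * q3 + q3 ^+ 2 * 32)) * 32 + Qf a b c (r1, r2, r3).
  by rewrite /Qf /=; ring.
by rewrite modzMDl.
Qed.

Lemma count_valid a b c m0 fam x : chk_a a b c m0 fam -> modz (Qf a b c x) 8 = m0 ->
  count (valid x) fam = 2%N.
Proof.
move=> /allP H hm; rewrite (eq_count (valid_cong x)).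
have := H (md 8 x) (@mem_box 8 _ _ _ (@mem_rng_mod 8 _ isT) (@mem_rng_mod 8 _ isT) (@mem_rng_mod 8 _ isT)).
by rewrite -Qf_mod8 hm eqxx /= => /eqP.
Qed.

Lemma count_pre a b c m0 fam t : chk_b a b c m0 fam ->
  modz (Qf a b c (odd3 t)) 32 = modz (4 * m0) 32 -> count (pre t) fam = 1%N.
Proof.
move=> /allP H hm; rewrite (eq_count (pre_cong t)).
have := H (md 16 t) (@mem_box 16 _ _ _ (@mem_rng_mod 16 _ isT) (@mem_rng_mod 16 _ isT) (@mem_rng_mod 16 _ isT)).
by rewrite -Qf_mod32 hm eqxx /= => /eqP.
Qed.

Lemma mem_zbox (B : nat) (c : int) : - B%:Z <= c -> c <= B%:Z -> c \in zbox B.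
Proof.
move=> h1 h2; apply/mapP; exists (absz (c + B%:Z)).
  rewrite mem_iota add0n; apply/ltP; lia.
rewrite gez0_abs; first by rewrite addrK.
by rewrite -lerBlDr sub0r.
Qed.

Lemma mem_ztriples (B : nat) (x y z : int) :
  x \in zbox B -> y \in zbox B -> z \in zbox B -> (x, y, z) \in ztriples B.
Proof.
move=> hx hy hz; apply/flatten_mapP; exists x => //.
apply/flatten_mapP; exists y => //; exact: map_f.
Qed.

Lemma tt1_ge0 (t : int) : 0 <= t * (t + 1).
Proof. nia. Qed.

Lemma sq_bound (x k : int) : x * x <= k -> - (k + 1) <= x <= k + 1.
Proof. move=> h; apply/andP; split; nia. Qed.

Lemma tri_bound (t k : int) : t * (t + 1) <= 2 * k -> - (k + 1) <= t <= k + 1.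
Proof. move=> h; apply/andP; split; nia. Qed.

Lemma zbox_of (B : nat) (c : int) : - (B%:Z + 1) <= c <= B%:Z + 1 -> c \in zbox B.+1.
Proof. case/andP=> h1 h2; apply: mem_zbox; lia. Qed.

Lemma boundN (a b c m : int) x : 1 <= a -> 1 <= b -> 1 <= c -> Qf a b c x = m ->
  [/\ x.1.1 * x.1.1 <= m, x.1.2 * x.1.2 <= m & x.2 * x.2 <= m].
Proof.
rewrite /Qf !expr2 => ha hb hc <-; split; nia.
Qed.

Lemma boundT (a b c k : int) (t : v3) : 1 <= a -> 1 <= b -> 1 <= c ->
  a * (t.1.1 * (t.1.1 + 1)) + b * (t.1.2 * (t.1.2 + 1)) + c * (t.2 * (t.2 + 1)) = 2 * k ->
  [/\ t.1.1 * (t.1.1 + 1) <= 2 * k, t.1.2 * (t.1.2 + 1) <= 2 * k & t.2 * (t.2 + 1) <= 2 * k].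
Proof.
move=> ha hb hc <-.
have := tt1_ge0 t.1.1; have := tt1_ge0 t.1.2; have := tt1_ge0 t.2.
split; nia.
Qed.

Lemma uniq_flatten_map (T U : eqType) (f : T -> seq U) s : uniq s ->
  (forall x, x \in s -> uniq (f x)) ->
  (forall x y u, x \in s -> y \in s -> u \in f x -> u \in f y -> x = y) ->
  uniq (flatten (map f s)).
Proof.
elim: s => //= x s IH /andP[xs us] hu hd.
rewrite cat_uniq hu ?mem_head //= IH //; last first.
- by move=> y z u ys zs; apply: hd; rewrite inE ?ys ?zs orbT.
- by move=> y ys; apply: hu; rewrite inE ys orbT.
rewrite andbT; apply/hasP => -[u /flatten_mapP [y ys uy] ux].
have exy : x = y by apply: hd ux uy; rewrite inE ?eqxx ?ys ?orbT.
by rewrite exy ys in xs.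
Qed.

Lemma uniq_zbox B : uniq (zbox B).
Proof.
rewrite map_inj_uniq ?iota_uniq // => i j /eqP; rewrite -subr_eq0 opprB addrA subrK subr_eq0.
by move/eqP => [].
Qed.

Lemma uniq_ztriples B : uniq (ztriples B).
Proof.
apply: uniq_flatten_map; first exact: uniq_zbox.
- move=> x _; apply: uniq_flatten_map; first exact: uniq_zbox.
  + move=> y _; rewrite map_inj_uniq ?uniq_zbox // => z1 z2 [] //.
  + by move=> y1 y2 u _ _ /mapP [z1 _ ->] /mapP [z2 _ []].
- by move=> x1 x2 u _ _ /flatten_mapP [y1 _ /mapP [z1 _ ->]] /flatten_mapP [y2 _ /mapP [z2 _ []]].
Qed.

Lemma sumn_const (T : eqType) (f : T -> nat) (k : nat) s :
  (forall x, x \in s -> f x = k) -> sumn (map f s) = (k * size s)%N.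
Proof.
elim: s => [|x s IH] h /=; first by rewrite muln0.
by rewrite h ?mem_head // IH ?mulnS // => y ys; apply: h; rewrite inE ys orbT.
Qed.

Lemma sc_inj (k : int) v w : k != 0 -> sc k v = sc k w -> v = w.
Proof.
move=> k0; case: v => [[v1 v2] v3]; case: w => [[w1 w2] w3] [] /(mulfI k0) -> /(mulfI k0) -> /(mulfI k0) -> //.
Qed.

Lemma sc_sc (k l : int) v : sc k (sc l v) = sc (k * l) v.
Proof. by rewrite /sc /=; congr (_, _, _); ring. Qed.

Lemma NrepE (a b c m : nat) :
  Nrep a b c m = size [seq v <- ztriples m.+1 | Qf a%:Z b%:Z c%:Z v == m%:Z].
Proof. by rewrite /Nrep; congr size; apply: eq_filter => -[[x y] z]. Qed.

Lemma odd3_eq (a b c n m : nat) (t : v3) : (4 * m = 8 * n + a + b + c)%N ->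
  (Qf a%:Z b%:Z c%:Z (odd3 t) == 4 * m%:Z) =
  (a%:Z * (t.1.1 * (t.1.1 + 1)) + b%:Z * (t.1.2 * (t.1.2 + 1)) + c%:Z * (t.2 * (t.2 + 1))
     == (2 * n)%:Z).
Proof.
move=> hm.
have hm' : 4 * m%:Z = 4 * (2 * n)%:Z + (a%:Z + b%:Z + c%:Z).
  by apply/eqP; rewrite -!PoszM -!PoszD eqz_nat; apply/eqP; rewrite hm; lia.
have -> : Qf a%:Z b%:Z c%:Z (odd3 t) =
  4 * (a%:Z * (t.1.1 * (t.1.1 + 1)) + b%:Z * (t.1.2 * (t.1.2 + 1)) + c%:Z * (t.2 * (t.2 + 1)))
  + (a%:Z + b%:Z + c%:Z) by rewrite /Qf /odd3 /=; ring.
rewrite hm'; apply/eqP/eqP => [/addIr /(mulfI (isT : (4 : int) != 0)) | ->] //.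
Qed.

Lemma trepE (a b c n m : nat) : (4 * m = 8 * n + a + b + c)%N ->
  trep a b c n = size [seq t <- ztriples n.+1 | Qf a%:Z b%:Z c%:Z (odd3 t) == 4 * m%:Z].
Proof.
move=> hm; rewrite /trep; congr size; apply: eq_filter => -[[x y] z].
by rewrite (@odd3_eq a b c n m (x, y, z) hm).
Qed.

Definition tco (A : mat) (x : v3) : v3 :=
  (((dot A.1.1 x - 4) %/ 8)%Z, ((dot A.1.2 x - 4) %/ 8)%Z, ((dot A.2 x - 4) %/ 8)%Z).
Definition xco (C : mat) (t : v3) : v3 :=
  ((dot C.1.1 (odd3 t) %/ 32)%Z, (dot C.1.2 (odd3 t) %/ 32)%Z, (dot C.2 (odd3 t) %/ 32)%Z).

Lemma valid_app x AC : valid x AC -> app AC.1 x = sc 4 (odd3 (tco AC.1 x)).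
Proof.
case/and3P => /eqP h1 /eqP h2 /eqP h3; rewrite /app /sc /odd3 /tco /=.
by rewrite {1}(mod_4 _ h1) {1}(mod_4 _ h2) {1}(mod_4 _ h3); congr (_, _, _); ring.
Qed.

Lemma pre_app t AC : pre t AC -> app AC.2 (odd3 t) = sc 32 (xco AC.2 t).
Proof.
case/and3P => /eqP h1 /eqP h2 /eqP h3; rewrite /app /sc /xco /=.
by rewrite {1}(mod_0 _ _ h1) {1}(mod_0 _ _ h2) {1}(mod_0 _ _ h3); congr (_, _, _); ring.
Qed.

Lemma valid_sc4 x AC t : app AC.1 x = sc 4 (odd3 t) -> valid x AC /\ tco AC.1 x = t.
Proof.
case: t => [[t1 t2] t3]; rewrite /app /sc /odd3 /valid /tco /= => -[-> -> ->].
have e : forall s : int, 4 * (2 * s + 1) = s * 8 + 4 by move=> s; ring.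
rewrite !e !modzMDl !modz_small // !addrK !mulzK //.
Qed.

Lemma pre_sc32 t AC x : app AC.2 (odd3 t) = sc 32 x -> pre t AC.
Proof.
by rewrite /app /sc /pre /= => -[-> -> ->]; rewrite !modzMr !eqxx.
Qed.

Theorem generic (a b c n m : nat) (m0 : int) (fam : seq (mat * mat)) :
  (0 < a)%N -> (0 < b)%N -> (0 < c)%N ->
  (4 * m = 8 * n + a + b + c)%N ->
  modz m%:Z 8 = m0 ->
  uniq fam ->
  (forall AC, AC \in fam -> forall x, Qf a%:Z b%:Z c%:Z (app AC.1 x) = 64 * Qf a%:Z b%:Z c%:Z x) ->
  (forall AC, AC \in fam -> forall x, app AC.2 (app AC.1 x) = sc 128 x) ->
  (forall AC, AC \in fam -> forall x, app AC.1 (app AC.2 x) = sc 128 x) ->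
  chk_a a%:Z b%:Z c%:Z m0 fam -> chk_b a%:Z b%:Z c%:Z m0 fam ->
  trep a b c n = (2 * Nrep a b c m)%N.
Proof.
move=> ha hb hc hm hm0 ufam HQ HCA HAC ca cb.
have ha' : 1 <= a%:Z by rewrite lez_nat.
have hb' : 1 <= b%:Z by rewrite lez_nat.
have hc' : 1 <= c%:Z by rewrite lez_nat.
rewrite (@trepE a b c n m hm) NrepE.
set S := [seq v <- ztriples m.+1 | _].
set T := [seq t <- ztriples n.+1 | _].
pose P1 := flatten [seq [seq (AC, x) | AC <- [seq AC <- fam | valid x AC]] | x <- S].
pose P2 := flatten [seq [seq (AC, t) | AC <- [seq AC <- fam | pre t AC]] | t <- T].
pose psi (p : (mat * mat) * v3) := (p.1, tco p.1.1 p.2).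
have uS : uniq S by rewrite filter_uniq ?uniq_ztriples.
have uT : uniq T by rewrite filter_uniq ?uniq_ztriples.
have sP1 : size P1 = (2 * size S)%N.
  rewrite size_flatten /shape -map_comp (@sumn_const _ _ 2) // => x xS /=.
  rewrite size_map size_filter; apply: count_valid ca _.
  by move: xS; rewrite mem_filter => /andP[/eqP -> _].
have sP2 : size P2 = size T.
  rewrite size_flatten /shape -map_comp (@sumn_const _ _ 1) ?mul1n // => t tT /=.
  rewrite size_map size_filter; apply: count_pre cb _.
  move: tT; rewrite mem_filter => /andP[/eqP -> _].
  by rewrite -hm0 {1}(divz_eq m%:Z 8) mulrDr mulrA (mulrC 4) -mulrA modzMDl.
have memP1 p : p \in P1 -> [/\ p.2 \in S, p.1 \in fam & valid p.2 p.1].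
  case/flatten_mapP => x xS /mapP [AC]; rewrite mem_filter => /andP[v f] -> /=.
  by split.
have memP2 p : p \in P2 -> [/\ p.2 \in T, p.1 \in fam & pre p.2 p.1].
  case/flatten_mapP => x xS /mapP [AC]; rewrite mem_filter => /andP[v f] -> /=.
  by split.
have uP1 : uniq P1.
  apply: uniq_flatten_map => //.
    by move=> x _; rewrite map_inj_uniq ?filter_uniq // => u v /(congr1 fst) /= ->.
  by move=> x0 y0 u _ _ /mapP [AC _ ->] /mapP [AC' _] /(congr1 snd) /= ->.
have uP2 : uniq P2.
  apply: uniq_flatten_map => //.
    by move=> x _; rewrite map_inj_uniq ?filter_uniq // => u v /(congr1 fst) /= ->.
  by move=> x0 y0 u _ _ /mapP [AC _ ->] /mapP [AC' _] /(congr1 snd) /= ->.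
have key : perm_eq (map psi P1) P2.
  apply: uniq_perm => //.
    rewrite map_inj_in_uniq // => -[AC x] [AC' x'] /memP1 [/= _ f v] /memP1 [/= _ _ v'] h.
    have eAC : AC = AC' := congr1 fst h.
    subst AC'.
    have et : tco AC.1 x = tco AC.1 x' := congr1 snd h.
    have e1 := valid_app _ _ v; have e2 := valid_app _ _ v'.
    rewrite et -e2 in e1.
    have := HCA _ f x; rewrite e1 HCA // => /(@sc_inj 128 _ _ isT) ->.
    by [].
  move=> [AC t]; apply/idP/idP.
  - case/mapP => -[AC1 x] /memP1 [/= xS f v] [-> ->].
    have ex := valid_app _ _ v.
    set t1 := tco AC1.1 x in ex *.
    have Qx : Qf a%:Z b%:Z c%:Z x = m%:Z by move: xS; rewrite mem_filter => /andP[/eqP].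
    have Qt : Qf a%:Z b%:Z c%:Z (odd3 t1) = 4 * m%:Z.
      have := HQ _ f x; rewrite ex Qf_sc Qx.
      have -> : (64 : int) * m%:Z = 4 ^+ 2 * (4 * m%:Z) by ring.
      by move/(mulfI (isT : (4 ^+ 2 : int) != 0)).
    apply/flatten_mapP; exists t1.
      rewrite mem_filter Qt eqxx /=.
      have E : a%:Z * (t1.1.1 * (t1.1.1 + 1)) + b%:Z * (t1.1.2 * (t1.1.2 + 1)) + c%:Z * (t1.2 * (t1.2 + 1)) = (2 * n)%:Z.
        by apply/eqP; rewrite -(@odd3_eq a b c n m _ hm) Qt.
      rewrite PoszM in E; have [h1 h2 h3] := boundT _ _ _ _ _ ha' hb' hc' E.
      by apply: mem_ztriples; apply: zbox_of; apply: tri_bound.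
    apply: map_f; rewrite mem_filter f andbT.
    apply: (@pre_sc32 _ _ x); apply: (@sc_inj 4) => //.
    by rewrite -app_sc -ex HCA // sc_sc.
  - case/memP2 => /= tT f p.
    have ex := pre_app _ _ p.
    set x := xco AC.2 t in ex.
    have ax : app AC.1 x = sc 4 (odd3 t).
      apply: (@sc_inj 32) => //; rewrite -app_sc -ex HAC // sc_sc.
      by [].
    have [v et] := valid_sc4 _ _ _ ax.
    have Qt : Qf a%:Z b%:Z c%:Z (odd3 t) = 4 * m%:Z by move: tT; rewrite mem_filter => /andP[/eqP].
    have Qx : Qf a%:Z b%:Z c%:Z x = m%:Z.
      have := HQ _ f x; rewrite ax Qf_sc Qt.
      have -> : (4 : int) ^+ 2 * (4 * m%:Z) = 64 * m%:Z by ring.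
      by move/(mulfI (isT : (64 : int) != 0)).
    apply/mapP; exists (AC, x); last by rewrite /psi /= et.
    apply/flatten_mapP; exists x.
      rewrite mem_filter Qx eqxx /=.
      case: (boundN _ _ _ _ _ ha' hb' hc' Qx) => h1 h2 h3.
      by apply: mem_ztriples; apply: zbox_of; apply: sq_bound.
    by apply: map_f; rewrite mem_filter f v.
by rewrite -sP2 -(perm_size key) size_map sP1.
Qed.

From mathcomp Require Import ssrZ.
From Stdlib Require Import ZArith.
From mathcomp Require Import ring zify.

Definition Z3 := (Z * Z * Z)%type.
Definition tr3 (v : v3) : Z3 := (Z_of_int v.1.1, Z_of_int v.1.2, Z_of_int v.2).
Definition trM (M : mat) := (tr3 M.1.1, tr3 M.1.2, tr3 M.2).
Definition trAC (AC : mat * mat) := (trM AC.1, trM AC.2).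

Local Close Scope ring_scope.
Local Open Scope Z_scope.

Definition dotZ (r v : Z3) : Z := r.1.1 * v.1.1 + r.1.2 * v.1.2 + r.2 * v.2.
Definition QfZ (a b c : Z) (v : Z3) : Z := a * (v.1.1 * v.1.1) + b * (v.1.2 * v.1.2) + c * (v.2 * v.2).
Definition odd3Z (u : Z3) : Z3 := (2 * u.1.1 + 1, 2 * u.1.2 + 1, 2 * u.2 + 1).
Definition validZ (x : Z3) (AC : (Z3 * Z3 * Z3) * (Z3 * Z3 * Z3)) : bool :=
  [&& dotZ AC.1.1.1 x mod 8 =? 4, dotZ AC.1.1.2 x mod 8 =? 4 & dotZ AC.1.2 x mod 8 =? 4].
Definition preZ (t : Z3) (AC : (Z3 * Z3 * Z3) * (Z3 * Z3 * Z3)) : bool :=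
  [&& dotZ AC.2.1.1 (odd3Z t) mod 32 =? 0, dotZ AC.2.1.2 (odd3Z t) mod 32 =? 0
    & dotZ AC.2.2 (odd3Z t) mod 32 =? 0].
Definition chk_aZ (a b c m0 : Z) famZ : bool :=
  all (fun r => negb (QfZ a b c r mod 8 =? m0) || (count (validZ r) famZ == 2%nat)) (map tr3 (box 8)).
Definition chk_bZ (a b c m0 : Z) famZ : bool :=
  all (fun u => negb (QfZ a b c (odd3Z u) mod 32 =? (4 * m0) mod 32)
                || (count (preZ u) famZ == 1%nat)) (map tr3 (box 16)).

Local Close Scope Z_scope.
Local Open Scope ring_scope.

Lemma Zmod_bridge (x d : int) : 0 < d -> Z_of_int (modz x d) = Z.modulo (Z_of_int x) (Z_of_int d).
Proof.
move=> d0.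
have e := divz_eq x d.
have h1 := modz_ge0 x (lt0r_neq0 d0).
have h2 := ltz_pmod x d0.
apply: (Z.mod_unique_pos _ _ (Z_of_int (divz x d))); lia.
Qed.

Lemma eq_bridge (x y : int) : (x == y) = (Z_of_int x =? Z_of_int y)%Z.
Proof. apply/idP/idP => [/eqP -> | /Z.eqb_spec h]; [apply/Z.eqb_spec|apply/eqP]; lia. Qed.

Lemma modeq_bridge (x d y : int) : 0 < d ->
  (modz x d == y) = (Z.modulo (Z_of_int x) (Z_of_int d) =? Z_of_int y)%Z.
Proof. by move=> d0; rewrite eq_bridge Zmod_bridge. Qed.

Lemma dot_bridge r v : Z_of_int (dot r v) = dotZ (tr3 r) (tr3 v).
Proof. rewrite /dot /dotZ /tr3 /=; lia. Qed.

Lemma Qf_bridge a b c v : Z_of_int (Qf a b c v) = QfZ (Z_of_int a) (Z_of_int b) (Z_of_int c) (tr3 v).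
Proof. rewrite /Qf /QfZ /tr3 /= !expr2; lia. Qed.

Lemma odd3_bridge t : tr3 (odd3 t) = odd3Z (tr3 t).
Proof. rewrite /tr3 /odd3 /odd3Z; cbn [fst snd]; congr (_, _, _); lia. Qed.

Lemma valid_bridge r AC : valid r AC = validZ (tr3 r) (trAC AC).
Proof. by rewrite /valid /validZ !modeq_bridge // !dot_bridge. Qed.

Lemma pre_bridge t AC : pre t AC = preZ (tr3 t) (trAC AC).
Proof. by rewrite /pre /preZ !modeq_bridge // !dot_bridge odd3_bridge. Qed.

Lemma chk_a_bridge a b c m0 fam :
  chk_aZ (Z_of_int a) (Z_of_int b) (Z_of_int c) (Z_of_int m0) (map trAC fam) -> chk_a a b c m0 fam.
Proof.
rewrite /chk_aZ /chk_a all_map => h; apply: sub_all h => r /=.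
rewrite modeq_bridge // Qf_bridge count_map.
by rewrite (eq_count (valid_bridge r)).
Qed.

Lemma chk_b_bridge a b c m0 fam :
  chk_bZ (Z_of_int a) (Z_of_int b) (Z_of_int c) (Z_of_int m0) (map trAC fam) -> chk_b a b c m0 fam.
Proof.
rewrite /chk_bZ /chk_b all_map => h; apply: sub_all h => u /=.
rewrite eq_bridge !Zmod_bridge // Qf_bridge count_map odd3_bridge.
have -> : Z_of_int (4 * m0) = (4 * Z_of_int m0)%Z by lia.
by rewrite (eq_count (pre_bridge u)).
Qed.

Lemma all_fam (P : mat * mat -> Prop) (s : seq (mat * mat)) :
  foldr (fun x acc => P x /\ acc) True s -> forall AC, AC \in s -> P AC.
Proof.
elim: s => //= x s IH [px ps] AC; rewrite inE => /orP [/eqP -> // | /IH]; apply; exact: ps.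
Qed.

Definition fam1 : seq (mat * mat) :=
 [:: (((0, (-12), (-14)), ((-4), 0, 0), (0, (-4), 6)), ((0, (-32), 0), ((-6), 0, (-14)), ((-4), 0, 12)));
 (((0, (-12), (-14)), ((-4), 0, 0), (0, 4, (-6))), ((0, (-32), 0), ((-6), 0, 14), ((-4), 0, (-12))))].

Lemma chka1 : chk_a 1 4 7 5 fam1. Proof. apply: chk_a_bridge; vm_compute; reflexivity. Qed.
Lemma chkb1 : chk_b 1 4 7 5 fam1. Proof. apply: chk_b_bridge; vm_compute; reflexivity. Qed.

Lemma case1 (n : nat) : modz (2 * n + 3)%nat%:Z 8 = 5 ->
  trep 1 4 7 n = (2 * Nrep 1 4 7 (2 * n + 3))%nat.
Proof.
move=> h; apply: (@generic 1 4 7 n (2 * n + 3) 5 fam1).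
- by [].
- by [].
- by [].
- lia.
- exact: h.
- by vm_compute.
- apply: all_fam; rewrite /fam1 /=; do ! split; move=> [[x y] z]; rewrite /Qf /app /dot /=; ring.
- apply: all_fam; rewrite /fam1 /=; do ! split; move=> [[x y] z]; rewrite /app /dot /sc /=; congr (_, _, _); ring.
- apply: all_fam; rewrite /fam1 /=; do ! split; move=> [[x y] z]; rewrite /app /dot /sc /=; congr (_, _, _); ring.
- exact: chka1.
- exact: chkb1.
Qed.

Definition fam2 : seq (mat * mat) :=
 [:: ((((-3), (-14), (-18)), ((-1), 6, (-6)), ((-2), 0, 4)), (((-6), (-14), (-48)), ((-4), 12, 0), ((-3), (-7), 8)));
 ((((-3), (-14), (-18)), ((-1), 6, (-6)), (2, 0, (-4))), (((-6), (-14), 48), ((-4), 12, 0), ((-3), (-7), (-8))));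
 ((((-3), 14, (-18)), (1, 6, 6), ((-2), 0, 4)), (((-6), 14, (-48)), (4, 12, 0), ((-3), 7, 8)));
 ((((-3), 14, (-18)), (1, 6, 6), (2, 0, (-4))), (((-6), 14, 48), (4, 12, 0), ((-3), 7, (-8))))].

Lemma chka2 : chk_a 1 7 12 3 fam2. Proof. apply: chk_a_bridge; vm_compute; reflexivity. Qed.
Lemma chkb2 : chk_b 1 7 12 3 fam2. Proof. apply: chk_b_bridge; vm_compute; reflexivity. Qed.

Lemma case2 (n : nat) : modz (2 * n + 5)%nat%:Z 8 = 3 ->
  trep 1 7 12 n = (2 * Nrep 1 7 12 (2 * n + 5))%nat.
Proof.
move=> h; apply: (@generic 1 7 12 n (2 * n + 5) 3 fam2).
- by [].
- by [].
- by [].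
- lia.
- exact: h.
- by vm_compute.
- apply: all_fam; rewrite /fam2 /=; do ! split; move=> [[x y] z]; rewrite /Qf /app /dot /=; ring.
- apply: all_fam; rewrite /fam2 /=; do ! split; move=> [[x y] z]; rewrite /app /dot /sc /=; congr (_, _, _); ring.
- apply: all_fam; rewrite /fam2 /=; do ! split; move=> [[x y] z]; rewrite /app /dot /sc /=; congr (_, _, _); ring.
- exact: chka2.
- exact: chkb2.
Qed.

Definition fam3 : seq (mat * mat) :=
 [:: ((((-6), 0, (-28)), ((-2), 0, 12), (0, (-4), 0)), (((-12), (-28), 0), (0, 0, (-32)), ((-2), 6, 0)));
 ((((-6), 0, (-28)), (2, 0, (-12)), (0, (-4), 0)), (((-12), 28, 0), (0, 0, (-32)), ((-2), (-6), 0)))].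

Lemma chka3 : chk_a 1 7 28 3 fam3. Proof. apply: chk_a_bridge; vm_compute; reflexivity. Qed.
Lemma chkb3 : chk_b 1 7 28 3 fam3. Proof. apply: chk_b_bridge; vm_compute; reflexivity. Qed.

Lemma case3 (n : nat) : modz (2 * n + 9)%nat%:Z 8 = 3 ->
  trep 1 7 28 n = (2 * Nrep 1 7 28 (2 * n + 9))%nat.
Proof.
move=> h; apply: (@generic 1 7 28 n (2 * n + 9) 3 fam3).
- by [].
- by [].
- by [].
- lia.
- exact: h.
- by vm_compute.
- apply: all_fam; rewrite /fam3 /=; do ! split; move=> [[x y] z]; rewrite /Qf /app /dot /=; ring.
- apply: all_fam; rewrite /fam3 /=; do ! split; move=> [[x y] z]; rewrite /app /dot /sc /=; congr (_, _, _); ring.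
- apply: all_fam; rewrite /fam3 /=; do ! split; move=> [[x y] z]; rewrite /app /dot /sc /=; congr (_, _, _); ring.
- exact: chka3.
- exact: chkb3.
Qed.

Definition fam4 : seq (mat * mat) :=
 [:: ((((-3), (-6), (-14)), ((-6), 4, 0), ((-1), (-2), 6)), (((-6), (-16), (-14)), ((-9), 8, (-21)), ((-4), 0, 12)));
 ((((-3), (-6), (-14)), ((-6), 4, 0), (1, 2, (-6))), (((-6), (-16), 14), ((-9), 8, 21), ((-4), 0, (-12))));
 ((((-3), (-6), 14), (6, (-4), 0), ((-1), (-2), (-6))), (((-6), 16, (-14)), ((-9), (-8), (-21)), (4, 0, (-12))));
 ((((-3), (-6), 14), (6, (-4), 0), (1, 2, 6)), (((-6), 16, 14), ((-9), (-8), 21), (4, 0, 12)))].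

Lemma chka4 : chk_a 3 4 21 1 fam4. Proof. apply: chk_a_bridge; vm_compute; reflexivity. Qed.
Lemma chkb4 : chk_b 3 4 21 1 fam4. Proof. apply: chk_b_bridge; vm_compute; reflexivity. Qed.

Lemma case4 (n : nat) : modz (2 * n + 7)%nat%:Z 8 = 1 ->
  trep 3 4 21 n = (2 * Nrep 3 4 21 (2 * n + 7))%nat.
Proof.
move=> h; apply: (@generic 3 4 21 n (2 * n + 7) 1 fam4).
- by [].
- by [].
- by [].
- lia.
- exact: h.
- by vm_compute.
- apply: all_fam; rewrite /fam4 /=; do ! split; move=> [[x y] z]; rewrite /Qf /app /dot /=; ring.
- apply: all_fam; rewrite /fam4 /=; do ! split; move=> [[x y] z]; rewrite /app /dot /sc /=; congr (_, _, _); ring.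
- apply: all_fam; rewrite /fam4 /=; do ! split; move=> [[x y] z]; rewrite /app /dot /sc /=; congr (_, _, _); ring.
- exact: chka4.
- exact: chkb4.
Qed.

Definition fam5 : seq (mat * mat) :=
 [:: ((((-6), (-7), (-14)), ((-2), 3, 6), (0, (-6), 4)), (((-12), (-28), 0), ((-2), 6, (-16)), ((-3), 9, 8)));
 ((((-6), (-7), (-14)), ((-2), 3, 6), (0, 6, (-4))), (((-12), (-28), 0), ((-2), 6, 16), ((-3), 9, (-8))));
 ((((-6), 7, 14), (2, 3, 6), (0, (-6), 4)), (((-12), 28, 0), (2, 6, (-16)), (3, 9, 8)));
 ((((-6), 7, 14), (2, 3, 6), (0, 6, (-4))), (((-12), 28, 0), (2, 6, 16), (3, 9, (-8))))].

Lemma chka5 : chk_a 3 21 28 7 fam5. Proof. apply: chk_a_bridge; vm_compute; reflexivity. Qed.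
Lemma chkb5 : chk_b 3 21 28 7 fam5. Proof. apply: chk_b_bridge; vm_compute; reflexivity. Qed.

Lemma case5 (n : nat) : modz (2 * n + 13)%nat%:Z 8 = 7 ->
  trep 3 21 28 n = (2 * Nrep 3 21 28 (2 * n + 13))%nat.
Proof.
move=> h; apply: (@generic 3 21 28 n (2 * n + 13) 7 fam5).
- by [].
- by [].
- by [].
- lia.
- exact: h.
- by vm_compute.
- apply: all_fam; rewrite /fam5 /=; do ! split; move=> [[x y] z]; rewrite /Qf /app /dot /=; ring.
- apply: all_fam; rewrite /fam5 /=; do ! split; move=> [[x y] z]; rewrite /app /dot /sc /=; congr (_, _, _); ring.
- apply: all_fam; rewrite /fam5 /=; do ! split; move=> [[x y] z]; rewrite /app /dot /sc /=; congr (_, _, _); ring.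
- exact: chka5.
- exact: chkb5.
Qed.

Lemma modz8 (k r : nat) : (k %% 8 = r)%nat -> modz k%:Z 8 = r%:Z.
Proof. by move=> h; rewrite (modz_nat k 8) h. Qed.

Local Close Scope ring_scope.

Theorem theorem5p1 (n : nat) : 0 < n ->
  [/\ (n %% 4 = 1 -> trep 1 4 7 n = 2 * Nrep 1 4 7 (2 * n + 3)),
      (n %% 4 = 3 -> trep 1 7 12 n = 2 * Nrep 1 7 12 (2 * n + 5)),
      (n %% 4 = 1 -> trep 1 7 28 n = 2 * Nrep 1 7 28 (2 * n + 9)),
      (n %% 4 = 1 -> trep 3 4 21 n = 2 * Nrep 3 4 21 (2 * n + 7)) &
      (n %% 4 = 1 -> trep 3 21 28 n = 2 * Nrep 3 21 28 (2 * n + 13))].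
Proof.
move=> _; split => h.
- by apply: case1; apply: (@modz8 _ 5); lia.
- by apply: case2; apply: (@modz8 _ 3); lia.
- by apply: case3; apply: (@modz8 _ 3); lia.
- by apply: case4; apply: (@modz8 _ 1); lia.
- by apply: case5; apply: (@modz8 _ 7); lia.
Qed.
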